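(* For all $m\ge2$ and $n\ge1$, $CP_{m,n}\cap SDNN_{m,n}=SCP_{m,n}$.
   Context: $\mathbb{S}_{m,n}$: symmetric real $m$th order $n$-dimensional tensors. $(u^m)_{i_1\ldots i_m}=u_{i_1}\cdots u_{i_m}$; $(\mathcal{A}x^{m-1})_i=\sum_{i_2,\dots,i_m}a_{ii_2\ldots i_m}x_{i_2}\cdots x_{i_m}$; an H-eigenvalue of $\mathcal{A}$ is $\lambda\in\mathbb{R}$ with $\mathcal{A}x^{m-1}=\lambda(x_i^{m-1})_i$ for some nonzero $x\in\mathbb{R}^n$. $SDNN_{m,n}$ is the set of $\mathcal{A}\in\mathbb{S}_{m,n}$ with all entries nonnegative and all H-eigenvalues positive. $CP_{m,n}$ is the set of $\mathcal{A}=\sum_{k=1}^r(u^{(k)})^m$ with $u^{(k)}\in\mathbb{R}^n_+$; $SCP_{m,n}$ is the set of such $\mathcal{A}$ admitting a decomposition with $\mathrm{span}\{u^{(1)},\dots,u^{(r)}\}=\mathbb{R}^n$. *)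

(* Defs.v *)
From HB Require Import structures.
From mathcomp Require Import all_boot all_order all_algebra all_fingroup.
Set Implicit Arguments. Unset Strict Implicit. Unset Printing Implicit Defensive.
Import Order.TTheory GRing.Theory Num.Theory.
Local Open Scope ring_scope.

Definition tensor (R : rcfType) (m n : nat) := m.-tuple 'I_n -> R.

Definition is_sym (R : rcfType) (m n : nat) (A : tensor R m n) : Prop :=
  forall (s : 'S_m) (idx : m.-tuple 'I_n),
    A [tuple tnth idx (s j) | j < m] = A idx.

(* (A x^{m-1})_i = sum_{i_2..i_m} a_{i i_2 .. i_m} x_{i_2} ... x_{i_m} *)
Definition tapply (R : rcfType) (m n : nat) (A : tensor R m n) (x : 'I_n -> R)
    (i : 'I_n) : R :=
  \sum_(idx : m.-tuple 'I_n | head i idx == i) A idx * \prod_(k <- behead idx) x k.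

Definition is_H_eigenvalue (R : rcfType) (m n : nat) (A : tensor R m n) (lam : R) : Prop :=
  exists x : 'I_n -> R, (exists i, x i != 0) /\
    forall i, tapply A x i = lam * x i ^+ (m - 1).

Definition rank1 (R : rcfType) (n : nat) (m : nat) (u : 'I_n -> R) : tensor R m n :=
  fun idx => \prod_(k <- idx) u k.

Definition SDNN (R : rcfType) (m n : nat) (A : tensor R m n) : Prop :=
  is_sym A /\ (forall idx, 0 <= A idx) /\
  (forall lam, is_H_eigenvalue A lam -> 0 < lam).

Definition CP (R : rcfType) (m n : nat) (A : tensor R m n) : Prop :=
  exists (r : nat) (u : 'I_r -> 'I_n -> R),
    (forall k i, 0 <= u k i) /\
    (forall idx, A idx = \sum_(k < r) @rank1 R n m (u k) idx).

Definition spans_all (R : rcfType) (n r : nat) (u : 'I_r -> 'I_n -> R) : Prop :=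
  forall y : 'I_n -> R, exists c : 'I_r -> R,
    forall i, y i = \sum_(k < r) c k * u k i.

Definition SCP (R : rcfType) (m n : nat) (A : tensor R m n) : Prop :=
  exists (r : nat) (u : 'I_r -> 'I_n -> R),
    (forall k i, 0 <= u k i) /\
    (forall idx, A idx = \sum_(k < r) @rank1 R n m (u k) idx) /\
    spans_all u.

(* Main.v *)
Require Import Defs.
From mathcomp Require Import all_boot all_order all_algebra all_fingroup.
Set Implicit Arguments. Unset Strict Implicit. Unset Printing Implicit Defensive.
Import Order.TTheory GRing.Theory Num.Theory.
Local Open Scope ring_scope.

Section Aux.
Variable R : rcfType.

Lemma sum_tuple_S n m (F : m.+1.-tuple 'I_n -> R) :
  \sum_(t : m.+1.-tuple 'I_n) F t =
  \sum_(a : 'I_n) \sum_(t : m.-tuple 'I_n) F (cons_tuple a t).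
Proof.
rewrite pair_big /=.
rewrite (reindex (fun p : 'I_n * m.-tuple 'I_n => cons_tuple p.1 p.2)) //=.
exists (fun t => (thead t, behead_tuple t)).
  move=> [a t] _ /=; congr pair; try by apply: val_inj.
move=> t _; apply: val_inj => /=.
by case: t => [[|a s] //= _]; rewrite /thead (tnth_nth a).
Qed.

Lemma sum_tuple_pow n m (f : 'I_n -> R) :
  \sum_(t : m.-tuple 'I_n) \prod_(j <- t) f j = (\sum_j f j) ^+ m.
Proof.
elim: m => [|m IH].
  rewrite (eq_bigr (fun _ => 1)) => [|t _]; last by rewrite tuple0 big_nil.
  by rewrite sumr_const card_tuple expn0 expr0.
rewrite sum_tuple_S exprS mulr_suml; apply: eq_bigr => a _.
by rewrite -IH mulr_sumr; apply: eq_bigr => t _; rewrite big_cons.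
Qed.

Lemma sum_tuple_head n m i (F : m.+1.-tuple 'I_n -> R) :
  \sum_(t : m.+1.-tuple 'I_n | head i t == i) F t =
  \sum_(t : m.-tuple 'I_n) F (cons_tuple i t).
Proof.
rewrite big_mkcond sum_tuple_S (bigD1 i) //=.
rewrite [X in _ + X]big1 ?addr0.
  by apply: eq_bigr => t _; rewrite eqxx.
by move=> a /negbTE ai; apply: big1 => t _; rewrite ai.
Qed.

Lemma tapply_cp m n r (u : 'I_r -> 'I_n -> R) (A : tensor R m.+1 n) x i :
  (forall idx, A idx = \sum_(k < r) @rank1 R n m.+1 (u k) idx) ->
  tapply A x i = \sum_(k < r) u k i * (\sum_j u k j * x j) ^+ m.
Proof.
move=> HA; rewrite /tapply sum_tuple_head.
under eq_bigr do rewrite HA /rank1 /= mulr_suml.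
rewrite exchange_big; apply: eq_bigr => k _.
rewrite -sum_tuple_pow mulr_sumr; apply: eq_bigr => t _.
by rewrite big_cons -mulrA big_split.
Qed.


Lemma sym_cp m n r (u : 'I_r -> 'I_n -> R) (A : tensor R m n) :
  (forall idx, A idx = \sum_(k < r) @rank1 R n m (u k) idx) -> Defs.is_sym A.
Proof.
move=> HA s idx; rewrite !HA; apply: eq_bigr => k _.
rewrite /rank1 !big_tuple.
under eq_bigr do rewrite tnth_mktuple.
by rewrite -(reindex_inj (@perm_inj _ s) (P := xpredT) (F := fun j => u k (tnth idx j))).
Qed.

Lemma psum_gt0 (I : finType) (F : I -> R) k0 :
  (forall k, 0 <= F k) -> 0 < F k0 -> 0 < \sum_k F k.
Proof.
move=> H0 H1; rewrite (bigD1 k0) //=.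
by apply: ltr_pwDl => //; apply: sumr_ge0.
Qed.

End Aux.

Theorem mainTheorem12 (R : rcfType) (m n : nat) (hm : (2 <= m)%N) (hn : (1 <= n)%N)
    (A : tensor R m n) :
  (CP A /\ SDNN A) <-> SCP A.
Proof.
move: hm A; case: m => [|m] // hm A.
have m0 : (m == 0)%N = false by move: hm; case: (m).
split.
- move=> [[r [u [u0 HA]]] [Hsym [Hnn Hev]]].
  exists r, u; split => //; split => //.
  pose U : 'M[R]_(r, n) := \matrix_(k, i) u k i.
  case: (boolP (row_full U)) => [Hfull | Hnf].
    move=> y.
    have: (\row_i y i <= U)%MS by rewrite submx_full.
    case/submxP => D HD; exists (fun k => D 0 k) => i.
    have := congr1 (fun M : 'M[R]_(1, n) => M 0 i) HD; rewrite !mxE => ->.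
    by apply: eq_bigr => k _; rewrite mxE.
  exfalso.
  pose C := cokermx U.
  have UC : U *m C = 0 := mulmx_coker U.
  have rC : \rank C != 0%N.
    rewrite mxrank_coker subn_eq0 -ltnNge ltn_neqAle rank_leq_col andbT.
    exact: Hnf.
  case: (boolP [exists ij : 'I_n * 'I_n, C ij.1 ij.2 != 0]) => [/existsP [[i j] /= Cij] | /existsPn H].
    suff: (0:R) < 0 by rewrite ltxx.
    apply: Hev.
    exists (fun l => C l j); split; first by exists i.
    move=> l; rewrite (tapply_cp _ _ HA) mul0r big1 // => k _.
    have := congr1 (fun M : 'M[R]_(r, n) => M k j) UC; rewrite !mxE => H0.
    have -> : \sum_j0 u k j0 * C j0 j = 0.
      transitivity (\sum_j0 U k j0 * C j0 j); last exact: H0.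
      by apply: eq_bigr => j1 _; rewrite /U mxE.
    by rewrite expr0n m0 mulr0.
  have C0 : C = 0.
    apply/matrixP => i j.
    by move: (H (i, j)); rewrite /= negbK => /eqP ->; rewrite mxE.
  by move: rC; rewrite C0 mxrank0.
- move=> [r [u [u0 [HA Hsp]]]].
  split; first by exists r, u.
  split; first exact: (sym_cp HA).
  split.
    move=> idx; rewrite HA; apply: sumr_ge0 => k _.
    by rewrite /rank1; apply: prodr_ge0 => j _.
  move=> lam [x [[i0 xi0] Hx]].
  pose s k := \sum_j u k j * x j.
  have Hx' : forall i, \sum_k u k i * s k ^+ m = lam * x i ^+ m.
    by move=> i; rewrite -(tapply_cp x i HA) Hx subn1.
  have [k0 sk0] : exists k0, s k0 != 0.
    case: (pickP (fun k => s k != 0)) => [k0 sk0 | hall]; first by exists k0.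
    exfalso.
    have [c Hc] := Hsp x.
    have : 0 < \sum_i x i * x i.
      by apply: (@psum_gt0 _ _ (fun i => x i * x i) i0) => [i|]; rewrite ?lt0r ?mulf_neq0 //= -expr2 sqr_ge0.
    have -> : \sum_i x i * x i = \sum_k c k * s k.
      rewrite /s; under [RHS]eq_bigr do rewrite mulr_sumr.
      rewrite exchange_big; apply: eq_bigr => i _.
      rewrite {1}Hc mulr_suml; apply: eq_bigr => k _; rewrite mulrA.
      by rewrite mulrAC.
    rewrite big1 ?ltxx // => k _.
    by have := hall k; move/negbFE/eqP => ->; rewrite mulr0.
  case: (boolP (odd m)) => [om | em].
  +
    have E1 : \sum_i x i * \sum_k u k i * s k ^+ m = \sum_k s k ^+ m.+1.
      under eq_bigr do rewrite mulr_sumr.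
      rewrite exchange_big; apply: eq_bigr => k _.
      rewrite exprS /s mulr_suml; apply: eq_bigr => i _.
      by rewrite mulrA [x i * _]mulrC.
    have E2 : \sum_i x i * \sum_k u k i * s k ^+ m = lam * \sum_i x i ^+ m.+1.
      rewrite mulr_sumr; apply: eq_bigr => i _.
      by rewrite Hx' exprS mulrCA.
    have Ppos : 0 < \sum_i x i ^+ m.+1.
      apply: (@psum_gt0 _ _ (fun i => x i ^+ m.+1) i0) => [i|]; first by apply: exprn_even_ge0; rewrite /= om.
      by rewrite exprn_even_gt0 ?xi0 ?orbT //= om.
    have Qpos : 0 < \sum_k s k ^+ m.+1.
      apply: (@psum_gt0 _ _ (fun k => s k ^+ m.+1) k0) => [k|]; first by apply: exprn_even_ge0; rewrite /= om.
      by rewrite exprn_even_gt0 ?sk0 ?orbT //= om.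
    by rewrite -(pmulr_lgt0 _ Ppos) -E2 E1.
  + have E1 : \sum_i \sum_k u k i * s k ^+ m = \sum_k (\sum_i u k i) * s k ^+ m.
      by rewrite exchange_big; apply: eq_bigr => k _; rewrite mulr_suml.
    have E2 : \sum_i \sum_k u k i * s k ^+ m = lam * \sum_i x i ^+ m.
      by rewrite mulr_sumr; apply: eq_bigr => i _; rewrite Hx'.
    have Ppos : 0 < \sum_i x i ^+ m.
      apply: (@psum_gt0 _ _ (fun i => x i ^+ m) i0) => [i|]; first exact: exprn_even_ge0.
      by rewrite exprn_even_gt0 ?xi0 ?orbT.
    have [j0 hj0] : exists j, u k0 j * x j != 0.
      case: (pickP (fun j => u k0 j * x j != 0)) => [j hj | hall]; first by exists j.
      exfalso; move: sk0; rewrite /s big1 ?eqxx // => j _.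
      by have := hall j; move/negbFE/eqP.
    have uk0 : 0 < \sum_i u k0 i.
      apply: (@psum_gt0 _ _ (fun i => u k0 i) j0) => // ; rewrite lt0r u0 andbT.
      by move: hj0; rewrite mulf_eq0 negb_or => /andP [].
    have Qpos : 0 < \sum_k (\sum_i u k i) * s k ^+ m.
      apply: (@psum_gt0 _ _ (fun k => (\sum_i u k i) * s k ^+ m) k0) => [k|].
        by apply: mulr_ge0; [apply: sumr_ge0 | apply: exprn_even_ge0].
      by apply: mulr_gt0 => //; rewrite exprn_even_gt0 ?sk0 ?orbT.
    by rewrite -(pmulr_lgt0 _ Ppos) -E2 E1.
Qed.
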